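(* Let $J\ge1$ and let $\boldsymbol\lambda_j^0=(\alpha_j^0,\sigma_j^0)$, $j=1,\dots,J$, with $\max_j|\alpha_j^0|<1$ and $\min_j\sigma_j^0>0$. For $\boldsymbol\lambda=(\alpha,\sigma)$ with $|\alpha|<1$ let $h(\boldsymbol\lambda,\theta)=\frac{\sigma^2}{|1-\alpha e^{i\theta}|^2}=\gamma_0(\boldsymbol\lambda)+2\sum_{\ell\ge1}\gamma_\ell(\boldsymbol\lambda)\cos(\ell\theta)$, $\gamma_\ell(\boldsymbol\lambda)=\sigma^2\alpha^\ell/(1-\alpha^2)$, be the spectral density of the univariate AR(1) process $x_t=\alpha x_{t-1}+\sigma z_t$ driven by unit-variance white noise. If $\alpha_1^0,\dots,\alpha_J^0$ are all distinct, then the $J\times J$ matrix $$\mathbf{G}(\boldsymbol\Lambda_J^0)=\frac{1}{2\pi}\int_0^{2\pi}\underline{\mathbf{h}}^0(\theta)(\underline{\mathbf{h}}^0(\theta))^T\,d\theta,\qquad\underline{\mathbf{h}}^0(\theta)=(h(\boldsymbol\lambda_j^0,\theta))_{j=1}^J,$$ is positive definite.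
   Context: This concerns a $p$-dimensional AR(1) process $X_t=\mathbf{A}X_{t-1}+\Sigma^{1/2}Z_t$ with $\mathbf{A},\Sigma$ symmetric/Hermitian, $\|\mathbf{A}\|<1$, simultaneously diagonalized by a unitary $\mathbf{U}$ with $\mathbf{U}^*\mathbf{A}\mathbf{U}=\mathrm{diag}(\alpha_k)$, $\mathbf{U}^*\Sigma\mathbf{U}=\mathrm{diag}(\sigma_k^2)$, whose joint spectrum of $(\mathbf{A},\Sigma)$ is $\sum_{j=1}^J\omega_j\delta_{\boldsymbol\lambda_j^0}$; $h(\boldsymbol\lambda_j^0,\cdot)$ is then the spectral density of the $j$-th type of coordinate process. *)

(* Defs.v *)
From Stdlib Require Import Reals.
From Coquelicot Require Import Coquelicot.
From mathcomp Require Import all_boot all_algebra.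
From mathcomp Require Import Rstruct.
Local Open Scope R_scope.

Set Implicit Arguments.
Unset Strict Implicit.
Unset Printing Implicit Defensive.

Definition expi (theta : R) : C := (cos theta, sin theta).

Definition h_ar1 (a s theta : R) : R :=
  (s ^ 2 / (Cmod (Cminus (RtoC 1) (Cmult (RtoC a) (expi theta)))) ^ 2).

Definition G_mat (J : nat) (alpha sigma : 'I_J -> R) : 'M[R]_J :=
  \matrix_(j < J, k < J)
    (/ (2 * PI) * RInt (fun theta => h_ar1 (alpha j) (sigma j) theta
                                    * h_ar1 (alpha k) (sigma k) theta)
                       0 (2 * PI)).

Definition pos_def (J : nat) (M : 'M[R]_J) : Prop :=
  (forall j k, M j k = M k j) /\
  (forall x : 'cV[R]_J, x <> const_mx 0 -> 0 < (mulmx (mulmx (trmx x) M) x) ord0 ord0).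

(* Main.v *)
Require Import Defs.
From Stdlib Require Import Reals.
From Coquelicot Require Import Coquelicot.
From mathcomp Require Import all_boot all_algebra.
From mathcomp Require Import Rstruct.
From Stdlib Require Import Lra Psatz Classical.
Import GRing.Theory Num.Theory.
Local Open Scope R_scope.
Lemma den_pos a c : Rabs a < 1 -> -1 <= c <= 1 -> 0 < 1 + a ^ 2 - 2 * a * c.
Proof.
intros Ha Hc. destruct (Rle_dec 0 a) as [H|H].
- rewrite Rabs_pos_eq in Ha; nra.
- rewrite Rabs_left in Ha; nra.
Qed.

Lemma h_ar1E a s t : Rabs a < 1 -> h_ar1 a s t = s ^ 2 / (1 + a ^ 2 - 2 * a * cos t).
Proof.
intros Ha. unfold h_ar1, Cmod, expi, Cminus, Cmult, RtoC; simpl.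
rewrite !Rmult_1_r sqrt_sqrt.
- f_equal. pose proof (sin2_cos2 t) as H. unfold Rsqr in H. nra.
- apply Rplus_le_le_0_compat; apply Rle_0_sqr.
Qed.

Lemma h_cont a s t : Rabs a < 1 -> continuous (fun t => h_ar1 a s t) t.
Proof.
intros Ha. apply (continuous_ext (fun t => s ^ 2 / (1 + a ^ 2 - 2 * a * cos t)) (fun t => h_ar1 a s t)).
{ intros; rewrite h_ar1E; auto. }
apply (@ex_derive_continuous R_AbsRing R_NormedModule). auto_derive.
pose proof (den_pos a (cos t) Ha (COS_bound t)). lra.
Qed.

Lemma RInt_pos_pt (g : R -> R) a b t0 :
  a < t0 < b -> (forall t, continuous g t) -> (forall t, 0 <= g t) -> 0 < g t0 ->
  0 < RInt g a b.
Proof.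
intros Ht Hc Hp Hg.
assert (L : locally t0 (fun y => ball (g t0) (mkposreal _ Hg) (g y))).
{ apply (proj1 (filterlim_locally (F := locally t0) g (g t0))). apply Hc. }
destruct L as [d Hd].
set (e := Rmin (d/2) (Rmin (t0 - a) (b - t0))).
assert (He1 : e <= d/2) by apply Rmin_l.
assert (He2 : e <= t0 - a) by (eapply Rle_trans; [apply Rmin_r|apply Rmin_l]).
assert (He3 : e <= b - t0) by (eapply Rle_trans; [apply Rmin_r|apply Rmin_r]).
assert (Hd0 := cond_pos d).
assert (He0 : 0 < e) by (apply Rmin_glb_lt; [lra|apply Rmin_glb_lt; lra]).
set (l := t0 - e). set (r := t0 + e).
assert (Hl : a <= l < t0) by (unfold l; lra).
assert (Hr : t0 < r <= b) by (unfold r; lra).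
assert (E : forall u v, ex_RInt g u v) by (intros; apply (@ex_RInt_continuous R_CompleteNormedModule); intros; apply Hc).
rewrite <- (RInt_Chasles g a l b) by auto.
rewrite <- (RInt_Chasles g l r b) by auto.
unfold plus; simpl.
assert (0 <= RInt g a l) by (apply RInt_ge_0; auto; lra).
assert (0 <= RInt g r b) by (apply RInt_ge_0; auto; lra).
assert (0 < RInt g l r).
{ apply RInt_gt_0; [lra| |intros; apply Hc].
  intros x Hx. specialize (Hd x).
  assert (B : ball t0 d x).
  { unfold ball; simpl; unfold AbsRing_ball, abs, minus, plus, opp; simpl.
    unfold l, r in Hx. change (Hierarchy.opp t0) with (- t0). apply Rabs_def1; lra. }
  specialize (Hd B). assert (Hd' : Rabs (g x - g t0) < g t0) by exact Hd.
  apply Rabs_def2 in Hd'. lra. }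
lra.
Qed.

Lemma is_RInt_big (I : Type) (r : seq I) (F : I -> R -> R) (v : I -> R) a b :
  (forall i, is_RInt (F i) a b (v i)) ->
  is_RInt (fun t => (\sum_(i <- r) F i t)%R) a b (\sum_(i <- r) v i)%R.
Proof.
intros H. induction r as [|i r IH].
- rewrite big_nil.
  apply (is_RInt_ext (fun _ => 0)).
  { intros; rewrite big_nil; reflexivity. }
  have := is_RInt_const a b 0. unfold scal; simpl; unfold mult; simpl. rewrite Rmult_0_r. auto.
- rewrite big_cons.
  apply (is_RInt_ext (fun t => plus (F i t) (\sum_(j <- r) F j t)%R)).
  { intros; rewrite big_cons; reflexivity. }
  apply (is_RInt_plus (V:=R_NormedModule)); auto.
Qed.

Lemma cont_big (I : Type) (r : seq I) (F : I -> R -> R) t :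
  (forall i, continuous (F i) t) ->
  continuous (fun t => (\sum_(i <- r) F i t)%R) t.
Proof.
intros H. induction r as [|i r IH].
- apply (continuous_ext (fun _ => 0)). { intros; rewrite big_nil; reflexivity. }
  apply continuous_const.
- apply (continuous_ext (fun t => plus (F i t) (\sum_(j <- r) F j t)%R)).
  { intros; rewrite big_cons; reflexivity. }
  apply (continuous_plus (K:=R_AbsRing) (V:=R_NormedModule)); auto.
Qed.

Definition dd (a c : R) : R := (- (2%:R * a) * c + (1%:R + a ^+ 2))%R.

Lemma ddE a c : dd a c = 1 + a ^ 2 - 2 * a * c.
Proof. rewrite /dd -!RmultE -!RplusE -!RoppE -RpowE -!INRE. simpl. ring. Qed.

Lemma aux4 (a b c d : R) : a * (b * c) * d = b * (a * d * c).
Proof. ring. Qed.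

Lemma ab_ne1 a b : Rabs a < 1 -> Rabs b < 1 -> a * b <> 1.
Proof.
intros Ha Hb H. have := Rabs_mult a b. rewrite H Rabs_R1.
have := Rabs_pos a; have := Rabs_pos b. nra.
Qed.

Lemma inv_bounds i : 0 < / INR i.+2 < 1.
Proof.
have H : 1 < INR i.+2 by rewrite !S_INR; have := pos_INR i; lra.
split; first by apply: Rinv_0_lt_compat; lra.
rewrite -Rinv_1; apply: Rinv_1_lt_contravar; lra.
Qed.

Lemma aux_ff (a b c d : R) : a * b * (c * d) = a * c * (b * d).
Proof. ring. Qed.

From mathcomp Require Import ring zify.

Section Alg.
Local Open Scope ring_scope.

Lemma size_prod_lin (I : Type) (s : seq I) (Q : pred I) (F : I -> {poly R}) :
  (forall i, (size (F i) <= 2)%N) -> (size (\prod_(i <- s | Q i) F i)%R <= (size s).+1)%N.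
Proof.
move=> HF; elim: s => [|i s IH]; first by rewrite big_nil size_poly1.
rewrite big_cons; case: (Q i) => //=; last exact: leqW.
apply: leq_trans (size_mul_leq _ _) _.
have := HF i; move: IH; set a := size _; set b := size _; rewrite -subn1; move: (size (F i)) a b => c a b; clear; lia.
Qed.


Lemma lin_indep (J : nat) (al y : 'I_J -> R) (rs : seq R) :
  (forall j k, al j * al k != 1%:R) -> injective al -> uniq rs -> (J < size rs)%N ->
  (forall k, dd (al k) 0 != 0) ->
  (forall c k, c \in rs -> dd (al k) c != 0) ->
  (forall c, c \in rs -> \sum_j y j / dd (al j) c = 0) ->
  forall j, y j = 0.
Proof.
move=> Hal Hinj Huniq Hsize Hd0 Hd Hsum.
pose D k := (- (2%:R * al k))%:P * 'X + (1%:R + al k ^+ 2)%:P.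
have DE k x : (D k).[x] = dd (al k) x by rewrite /D hornerMXaddC hornerC.
pose P := \sum_j y j *: \prod_(k | k != j) D k.
have PE x : P.[x] = \sum_j y j * \prod_(k | k != j) dd (al k) x.
  rewrite /P horner_sum; apply: eq_bigr => j _.
  by rewrite hornerZ horner_prod; congr (_ * _); apply: eq_bigr => k _; rewrite DE.
have Pj x j : P.[x] = y j * \prod_(k | k != j) dd (al k) x
     + \sum_(i | i != j) y i * \prod_(k | k != i) dd (al k) x.
  by rewrite PE (bigD1 j).
have P0 : P = 0.
  apply: (@roots_geq_poly_eq0 _ P rs) => //.
  - apply/allP => c Hc; rewrite /root PE.
    have := Hsum c Hc => /(congr1 (fun z => (\prod_k dd (al k) c) * z)).
    rewrite mulr0 mulr_sumr => E; rewrite -[X in _ == X]E; apply/eqP; apply: eq_bigr => j _.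
    rewrite [in RHS](bigD1 j) //=.
    have := Hd c j Hc; set u := dd _ _ => Hu.
    by field.
  - apply: leq_trans Hsize; rewrite /P.
    apply: leq_trans (size_sum _ _ _) _.
    apply/bigmax_leqP => j _.
    apply: leq_trans (size_scale_leq _ _) _.
    apply: leq_trans; first (apply: size_prod_lin => k; rewrite /D size_MXaddC;
      case: ifP => // _; have := size_polyC_leq1 (- (2%:R * al k)); move: (size _) => n; clear; lia).
    by rewrite -[index_enum _]enumT -cardT card_ord.
have Py x : P.[x] = 0 by rewrite P0 horner0.
have ph1 j : al j != 0 -> y j = 0.
  move=> Hj.
  pose r := ((1%:R + al j ^+ 2) / (2%:R * al j))%R.
  have H2 : (2%:R : R) != 0 by rewrite pnatr_eq0.
  have Hdj : dd (al j) r = 0.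
    by rewrite /dd /r; field.
  have := Pj r j; rewrite Py.
  rewrite [\sum_(i | i != j) _]big1 ?addr0; last first.
    move=> i Hi; rewrite (bigD1 j) /=; last by rewrite eq_sym.
    by rewrite Hdj mul0r mulr0.
  move=> /esym /eqP; rewrite mulf_eq0 => /orP [/eqP //|].
  move/eqP => Hp; exfalso; move: Hp; apply/eqP/prodf_neq0 => k Hk.
  have -> : dd (al k) r = ((al j - al k) * (1%:R - al j * al k) / al j)%R.
    by rewrite /dd /r; field.
  rewrite mulf_neq0 ?invr_eq0 // mulf_neq0 //.
    by rewrite subr_eq0; apply/eqP => /Hinj E; move: Hk; rewrite E eqxx.
  by rewrite subr_eq0 eq_sym Hal.
move=> j; case: (eqVneq (al j) 0) => [Hj|]; last exact: ph1.
have := Pj 0 j; rewrite Py.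
rewrite [\sum_(i | i != j) _]big1 ?addr0; last first.
  move=> i Hi; rewrite ph1 ?mul0r //; rewrite -Hj; apply/eqP => /Hinj E.
  by move: Hi; rewrite E eqxx.
move=> /esym /eqP; rewrite mulf_eq0 => /orP [/eqP //|].
move/eqP => Hp; exfalso; move: Hp; apply/eqP/prodf_neq0 => k Hk.
exact: Hd0.
Qed.

End Alg.

Theorem proposition3 (J : nat) (alpha sigma : 'I_J -> R) :
  (1 <= J)%nat ->
  (forall j, (Rabs (alpha j) < 1)) ->
  (forall j, (0 < sigma j)) ->
  injective alpha ->
  pos_def (G_mat alpha sigma).
Proof.
move=> HJ Ha Hs Hinj; split.
  move=> j k; rewrite !mxE; congr (_ * _); apply: RInt_ext => t _; apply Rmult_comm.
move=> x Hx.
pose h j t := h_ar1 (alpha j) (sigma j) t.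
pose F t := (\sum_j x j ord0 * h j t)%R.
have Hcont j t : continuous (h j) t by apply: h_cont.
have HI j k : is_RInt (fun t => h j t * h k t) 0 (2 * PI) (RInt (fun t => h j t * h k t) 0 (2 * PI)).
  apply: (@RInt_correct R_CompleteNormedModule).
  apply: (@ex_RInt_continuous R_CompleteNormedModule) => z _.
  exact: (continuous_mult (K:=R_AbsRing) _ _ _ (Hcont j z) (Hcont k z)).
have FF t : F t * F t = (\sum_j \sum_k x j ord0 * x k ord0 * (h j t * h k t))%R.
  rewrite /F RmultE mulr_suml; apply: eq_bigr => j _.
  rewrite mulr_sumr; apply: eq_bigr => k _.
  rewrite -!RmultE; exact: aux_ff.
pose I j k := RInt (fun t => h j t * h k t) 0 (2 * PI).
have HQ : is_RInt (fun t => F t * F t) 0 (2 * PI) (\sum_j \sum_k x j ord0 * x k ord0 * I j k)%R.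
  apply: (is_RInt_ext (fun t => \sum_j \sum_k x j ord0 * x k ord0 * (h j t * h k t))%R).
    by move=> t _; rewrite FF.
  apply: is_RInt_big => j; apply: is_RInt_big => k.
  exact: (is_RInt_scal _ _ _ (x j ord0 * x k ord0)%R _ (HI j k)).
have EQ : (x^T *m G_mat alpha sigma *m x)%R ord0 ord0 = / (2 * PI) * RInt (fun t => F t * F t) 0 (2 * PI).
  rewrite (is_RInt_unique _ _ _ _ HQ) !mxE.
  under eq_bigr do rewrite !mxE mulr_suml.
  rewrite exchange_big RmultE mulr_sumr; apply: eq_bigr => j _.
  rewrite mulr_sumr; apply: eq_bigr => k _.
  rewrite !mxE /I /h; exact: aux4.
rewrite EQ.
pose rs := mkseq (fun i => / INR i.+2) J.+1.
have Hrs c : c \in rs -> 0 < c < 1.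
  by rewrite /rs /mkseq => /mapP [i _ ->]; apply: inv_bounds.
have HPI := PI_RGT_0.
case: (classic (exists c, c \in rs /\ F (acos c) <> 0)) => [[c [Hc HF]] | Hno].
  have := Hrs c Hc => Hc'.
  have [t1 t2] := acos_bound_lt c ltac:(lra).
  apply: Rmult_lt_0_compat; first by apply: Rinv_0_lt_compat; lra.
  apply: (RInt_pos_pt (fun t => F t * F t) 0 (2 * PI) (acos c)).
  - lra.
  - move=> t; apply: (continuous_mult (K:=R_AbsRing));
    apply: cont_big => j; apply: (continuous_mult (K:=R_AbsRing)) => //;
    apply: continuous_const.
  - move=> t; apply: Rle_0_sqr.
  - exact: Rsqr_pos_lt.
have Hsum c : c \in rs -> (\sum_j (x j ord0 * pow (sigma j) 2) / dd (alpha j) c = 0)%R.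
  move=> Hc; have := Hrs c Hc => Hc'.
  transitivity (F (acos c)); last by apply: NNPP => H; apply: Hno; exists c.
  rewrite /F; apply: eq_bigr => j _.
  rewrite /h h_ar1E // cos_acos; last lra.
  by rewrite -ddE /Rdiv RinvE [RHS]mulrA.
have H1 j k : (alpha j * alpha k != 1%:R)%R.
  by apply/eqP; rewrite mulr1n; apply: ab_ne1.
have Huniq : uniq rs.
  apply: mkseq_uniq => i k E.
  have E' : INR i.+2 = INR k.+2 by apply: Rinv_eq_reg.
  by have := INR_eq _ _ E' => -[].
have Hsize : (J < size rs)%N by rewrite size_mkseq.
have Hd0 k : dd (alpha k) 0 != 0.
  apply/eqP; rewrite ddE; have := den_pos (alpha k) 0 (Ha k) ltac:(lra); lra.
have Hd c k : c \in rs -> dd (alpha k) c != 0.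
  move=> Hc; have := Hrs c Hc => Hc'.
  apply/eqP; rewrite ddE; have := den_pos (alpha k) c (Ha k) ltac:(lra); lra.
have Hy := @lin_indep J alpha _ rs H1 Hinj Huniq Hsize Hd0 Hd Hsum.
exfalso; apply: Hx; apply/matrixP => i j; rewrite !mxE (ord1 j).
have := Hy i => /Rmult_integral [//|H].
exfalso; have := Hs i => Hsi; apply: (pow_nonzero (sigma i) 2) => //; lra.
Qed.
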